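(* Let $A\in\mathbb{R}^{n\times n}$ and $C\in\mathbb{R}^{1\times n}$. Suppose there exist two eigenvalues $\lambda_p,\lambda_q$ of $A$ belonging to two different Jordan blocks of the Jordan form of $A$ and a positive integer $h$ such that $\lambda_p^h=\lambda_q^h$. Then for any $l\in\mathbb{N}$ and any positive integers $r_1,\ldots,r_l$, setting $t_i=r_ih$, the matrix with rows $CA^{t_1},\ldots,CA^{t_l}$ has rank less than $n$.
   Context: Setting: discrete-time single-output system $x(t+1)=Ax(t)+Bu(t)$, $y(t)=Cx(t)+Du(t)$ with output measured at selected time instances; the matrix with rows $CA^{t_1},\ldots,CA^{t_l}$ is the sample-based observability matrix. (For distinct nonzero $\lambda_p,\lambda_q$, the condition $\lambda_p^h=\lambda_q^h$ is equivalent to $|\lambda_p|=|\lambda_q|$ and $\pi/(\phi_q-\phi_p)=h/(2(k_q-k_p))$ for some distinct $k_p,k_q\in\{0,\ldots,h-1\}$, $\phi_i$ the phase of $\lambda_i$.) *)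

(* Defs.v *)
From HB Require Import structures.
From mathcomp Require Import all_boot all_order all_algebra.
From mathcomp Require Import complex reals.
Set Implicit Arguments. Unset Strict Implicit. Unset Printing Implicit Defensive.
Import Order.TTheory GRing.Theory Num.Theory.
Local Open Scope ring_scope.

(* The Jordan blocks
   are the maximal runs of consecutive indices linked by superdiagonal 1's. *)
Definition jordan_mx (F : nzRingType) (n : nat) (J : 'M[F]_n) : Prop :=
  (forall i j : 'I_n, j != i :> nat -> j != i.+1 :> nat -> J i j = 0) /\
  (forall i j : 'I_n, j = i.+1 :> nat -> (J i j = 0 \/ J i j = 1)) /\
  (forall i j : 'I_n, j = i.+1 :> nat -> J i j = 1 -> J i i = J j j).

Definition diff_jordan_blocks (F : nzRingType) (n : nat) (J : 'M[F]_n)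
  (i j : 'I_n) : Prop :=
  (i < j)%N /\ exists k k' : 'I_n,
    [/\ (i <= k)%N, (k < j)%N, k' = k.+1 :> nat & J k k' = 0].

Definition eigs_in_diff_jordan_blocks (R : rcfType) (n : nat)
  (A : 'M[R]_n) (lp lq : R[i]) : Prop :=
  exists (P J : 'M[R[i]]_n) (p q : 'I_n),
    [/\ P \in unitmx, jordan_mx J,
        map_mx (real_complex R) A = P *m J *m invmx P,
        J p p = lp /\ J q q = lq &
        (diff_jordan_blocks J p q \/ diff_jordan_blocks J q p)].

Definition sample_obs_mx (R : nzRingType) (n l : nat) (A : 'M[R]_n)
  (C : 'rV[R]_n) (t : 'I_l -> nat) : 'M[R]_(l, n) :=
  \matrix_(k < l, j < n) (C *m A ^+ t k) 0 j.

(* Main.v *)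
Require Import Defs.
From HB Require Import structures.
From mathcomp Require Import all_boot all_order all_algebra.
From mathcomp Require Import complex reals.
Import Order.TTheory GRing.Theory Num.Theory.
Local Open Scope ring_scope.

Lemma rank_lt_of_ker (F : fieldType) (l n : nat) (O : 'M[F]_(l, n)) (z : 'cV[F]_n) :
  z != 0 -> O *m z = 0 -> (\rank O < n)%N.
Proof.
move=> nz0 Oz; rewrite ltn_neqAle rank_leq_col andbT.
apply/negP => /eqP Hr.
have hf : row_free O^T by rewrite -row_leq_rank mxrank_tr Hr.
have := mulmx_free_eq0 z^T hf.
rewrite -trmx_mul Oz trmx0 eqxx => /esym /eqP H.
move: nz0; rewrite -(trmxK z) H trmx0 eqxx //.
Qed.

Lemma eig_pow (F : fieldType) n (A : 'M[F]_n) (x : 'cV[F]_n) a k :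
  A *m x = a *: x -> A ^+ k *m x = a ^+ k *: x.
Proof.
move=> H; elim: k => [|k IH]; first by rewrite expr0 expr0 mul1mx scale1r.
by rewrite exprS -mulmxE -mulmxA IH -scalemxAr H scalerA exprS mulrC.
Qed.

Lemma core (F : fieldType) n l (A : 'M[F]_n) (C : 'rV[F]_n) (t : 'I_l -> nat)
  (x y : 'cV[F]_n) (a b : F) :
  A *m x = a *: x -> A *m y = b *: y -> (forall k, a ^+ t k = b ^+ t k) ->
  x != 0 -> (forall c d : F, c *: x + d *: y = 0 -> d = 0) ->
  (\rank (sample_obs_mx A C t) < n)%N.
Proof.
move=> Ax Ay Eab nx ind.
suff [z [nz Az Cz]] : exists z : 'cV[F]_n, [/\ z != 0,
    forall k, A ^+ t k *m z = a ^+ t k *: z & C *m z = 0].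
  apply: (@rank_lt_of_ker _ _ _ _ z nz); apply/row_matrixP => k.
  have -> : row k (sample_obs_mx A C t *m z) = C *m (A ^+ t k *m z).
    by rewrite row_mul mulmxA; congr (_ *m _); apply/rowP => j; rewrite !mxE.
  by rewrite Az -scalemxAr Cz scaler0 row0.
set cx := (C *m x) 0 0; set cy := (C *m y) 0 0.
have [cx0|cxn0] := eqVneq cx 0.
  exists x; split => //; first by move=> k; rewrite (eig_pow _ _ _ _ _ _ Ax).
  by apply/matrixP => i j; rewrite !ord1 -/cx cx0 mxE.
exists (cy *: x - cx *: y); split.
- apply/negP => /eqP H; move: cxn0.
  have := ind cy (- cx); rewrite scaleNr => /(_ H) /eqP.
  by rewrite oppr_eq0 => ->.
- move=> k; rewrite mulmxBr -!scalemxAr (eig_pow _ _ _ _ _ _ Ax) (eig_pow _ _ _ _ _ _ Ay) Eab.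
  by rewrite scalerBr !scalerA mulrC [_ * cx]mulrC -Eab.
- apply/matrixP => i j; rewrite !ord1 mulmxBr -!scalemxAr !mxE -/cx -/cy.
  by rewrite /cx /cy !mxE mulrC subrr.
Qed.

Lemma block_start (F : nzRingType) n (J : 'M[F]_n) : jordan_mx J ->
  forall m (i : 'I_n), i = m :> nat -> exists s : 'I_n,
  [/\ (s <= i)%N, (forall j : 'I_n, j.+1 = s :> nat -> J j s = 0), J s s = J i i &
      (forall k k' : 'I_n, (s <= k)%N -> (k < i)%N -> k' = k.+1 :> nat -> J k k' = 1)].
Proof.
case=> [Jz [J01 J11]]; elim=> [|m IH] i Hi.
  exists i; split => //; first by move=> j; rewrite Hi.
  by move=> k k' hk hki; exfalso; move: (leq_ltn_trans hk hki); rewrite ltnn.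
have Hm : (m < n)%N by move: (ltn_ord i); rewrite Hi => /ltnW.
set j := Ordinal Hm.
have hji : i = j.+1 :> nat by rewrite Hi.
case: (J01 j i hji) => [H0|H1].
  exists i; split => //.
  - move=> j' hj'; have -> : j' = j by apply/val_inj => /=; apply/eq_add_S; rewrite hj' Hi.
    exact: H0.
  - by move=> k k' hk hki; exfalso; move: (leq_ltn_trans hk hki); rewrite ltnn.
have Ejj := J11 j i hji H1.
have [s [hs hz hd hc]] := IH j erefl.
exists s; split => //.
- by apply: (leq_trans hs); rewrite hji.
- by rewrite hd Ejj.
- move=> k k' hk hki hk'.
  have [hkj|hkj] := ltnP k j; first exact: hc.
  have ekj : k = j.
    by apply/val_inj/eqP; rewrite eqn_leq hkj andbT -ltnS -hji.
  have ek' : k' = i by apply/val_inj; rewrite /= hk' hji ekj.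
  by rewrite ekj ek'.
Qed.

Lemma start_eig (F : nzRingType) n (J : 'M[F]_n) (s : 'I_n) : jordan_mx J ->
  (forall j : 'I_n, j.+1 = s :> nat -> J j s = 0) ->
  J *m delta_mx s 0 = J s s *: delta_mx s (0 : 'I_1).
Proof.
case=> [Jz _] hz; apply/matrixP => a b; rewrite -colE !mxE ord1 eqxx andbT.
have [->|nas] := eqVneq a s; first by rewrite mulr1.
rewrite mulr0.
have [e|ne] := eqVneq (a.+1) (s : nat); first exact: hz.
apply: Jz; first by rewrite eq_sym.
by rewrite eq_sym.
Qed.

Lemma two (R : realType) n (A : 'M[R]_n) (C : 'rV[R]_n) (P J : 'M[R[i]]_n)
  (s1 s2 : 'I_n) l (t : 'I_l -> nat) :
  P \in unitmx -> jordan_mx J -> map_mx (real_complex R) A = P *m J *m invmx P ->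
  s1 != s2 ->
  (forall j : 'I_n, j.+1 = s1 :> nat -> J j s1 = 0) ->
  (forall j : 'I_n, j.+1 = s2 :> nat -> J j s2 = 0) ->
  (forall k, (J s1 s1) ^+ t k = (J s2 s2) ^+ t k) ->
  (\rank (sample_obs_mx A C t) < n)%N.
Proof.
move=> Pu jJ eA ns h1 h2 Et.
set f := real_complex R.
have mX : forall k, map_mx f (A ^+ k) = (map_mx f A) ^+ k.
  elim => [|k IH]; first by rewrite !expr0 map_mx1.
  by rewrite !exprS -!mulmxE map_mxM IH.
have -> : \rank (sample_obs_mx A C t)
    = \rank (sample_obs_mx (map_mx f A) (map_mx f C) t).
  rewrite -(mxrank_map f); congr (\rank _); apply/matrixP => i j.
  by rewrite [RHS]mxE -mX -map_mxM !mxE.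
have eig : forall s : 'I_n, (forall j : 'I_n, j.+1 = s :> nat -> J j s = 0) ->
    map_mx f A *m (P *m delta_mx s (0 : 'I_1)) = J s s *: (P *m delta_mx s (0 : 'I_1)).
  move=> s hs; rewrite eA -!mulmxA mulKmx // start_eig //.
  by rewrite -scalemxAr.
apply: (@core _ _ _ _ _ _ (P *m delta_mx s1 (0 : 'I_1)) (P *m delta_mx s2 (0 : 'I_1))
   (J s1 s1) (J s2 s2) (eig _ h1) (eig _ h2) Et).
- apply/negP => /eqP H; have := congr1 (mulmx (invmx P)) H.
  rewrite mulKmx // mulmx0 => /matrixP /(_ s1 0); rewrite !mxE !eqxx /= => /eqP.
  by rewrite oner_eq0.
- move=> c d H.
  have : P *m (c *: delta_mx s1 (0 : 'I_1) + d *: delta_mx s2 (0 : 'I_1)) = 0.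
    by rewrite mulmxDr -!scalemxAr.
  move/(congr1 (mulmx (invmx P))); rewrite mulKmx // mulmx0.
  move/matrixP => /(_ s2 0); rewrite !mxE eqxx eq_sym (negbTE ns) /=.
  by rewrite eqxx mulr0 add0r mulr1.
Qed.

Theorem lemma2 (R : realType) (n : nat) (A : 'M[R]_n) (C : 'rV[R]_n)
  (lp lq : R[i]) (h : nat) :
  eigs_in_diff_jordan_blocks A lp lq -> (0 < h)%N -> lp ^+ h = lq ^+ h ->
  forall (l : nat) (r : 'I_l -> nat), (forall k, 0 < r k)%N ->
  (\rank (sample_obs_mx A C (fun k => r k * h)%N) < n)%N.
Proof.
case=> P [J [p [q [Pu jJ eA [Jp Jq] hd]]]] hpos Eh l r rpos.
have key : forall p' q' : 'I_n, diff_jordan_blocks J p' q' ->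
    (J p' p') ^+ h = (J q' q') ^+ h ->
    (\rank (sample_obs_mx A C (fun k => r k * h)%N) < n)%N.
  move=> p' q' [hpq [k [k' [hpk hkq hk' Jk]]]] E.
  have [s1 [hs1 hz1 hd1 _]] := @block_start _ _ J jJ _ p' erefl.
  have [s2 [hs2 hz2 hd2 hc2]] := @block_start _ _ J jJ _ q' erefl.
  have ks2 : (k < s2)%N.
    rewrite ltnNge; apply/negP => hle; move: (hc2 k k' hle hkq hk').
    by rewrite Jk => /eqP; rewrite eq_sym oner_eq0.
  apply: (@two R n A C P J s1 s2 l (fun k => r k * h)%N Pu jJ eA _ hz1 hz2 _).
  - apply/negP => /eqP e; move: ks2; rewrite -e ltnNge.
    by rewrite (leq_trans hs1 hpk).
  - by move=> i /=; rewrite hd1 hd2 mulnC !exprM E.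
by case: hd => H; apply: (key _ _ H); rewrite Jp Jq Eh.
Qed.
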